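(* Consider shadow estimation with random sampling of $g$ from the Clifford group $\mathrm{Cl}_n$ according to an arbitrary probability distribution $p$ such that $S$ is invertible, with noise channels $\Lambda(g)$. Then for an observable $O$ and a state $\rho$ the second moment of the estimator is $$\mathbb{E}(\hat o^2)=\frac1{\sqrt d}\sum_{\substack{a,a'\in\mathbb{F}_2^{2n}:\\ [a,a']=0}}\frac{s_{a,a'}}{s_as_{a'}}(O|\hat\sigma_a)(O|\hat\sigma_{a'})\,(\hat\sigma_{a+a'}|\bar\Lambda_{a,a'}|\rho).$$
   Context: $d=2^n$; $(A|B)=\mathrm{Tr}(A^\dagger B)$, $(A|\mathcal X|B)=\mathrm{Tr}(A^\dagger\mathcal X(B))$; $|A)(B|$ is $C\mapsto(B|C)A$; $\omega(g)(A)=gAg^\dagger$, $\omega(g)^\dagger(A)=g^\dagger Ag$; $E_x=|x\rangle\langle x|$, $M=\sum_x|E_x)(E_x|$, $S=\sum_gp(g)\omega(g)^\dagger M\omega(g)$. Protocol: $g\sim p$, apply $\omega(g)\Lambda(g)$ to $\rho$, measure computational basis obtaining $x$ with probability $\langle x|\omega(g)\Lambda(g)(\rho)|x\rangle$; estimator $\hat o(g,x)=(O|S^{-1}\omega(g)^\dagger|E_x)$. Paulis $\sigma_a$, $a\in\mathbb{F}_2^{2n}$ (per qubit $\sigma_{00}=\mathbb 1,\sigma_{01}=X,\sigma_{11}=Y,\sigma_{10}=Z$), $\hat\sigma_a=\sigma_a/\sqrt d$; $[a,a']=0$ iff $\sigma_a,\sigma_{a'}$ commute, and then $\sigma_a\sigma_{a'}=(-1)^{\beta(a,a')}\sigma_{a+a'}$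 (addition mod 2). $Z_z=\bigotimes_iZ^{z_i}$; $\Xi_z(g)$ is the Pauli $\sigma_b$ with $g^\dagger Z_zg=\pm\sigma_b$. $s_a=\sum_z\sum_{g:\Xi_z(g)=\sigma_a}p(g)$. For commuting $a,a'$: $r_{a,a'}=\sum_{z,z'\in\mathbb{F}_2^n}\sum_{g:\Xi_z(g)=\sigma_a,\Xi_{z'}(g)=\sigma_{a'}}p(g)$, $s_{a,a'}=(-1)^{\beta(a,a')}r_{a,a'}$, $\bar\Lambda_{a,a'}=r_{a,a'}^{-1}\sum_{z,z'}\sum_{g:\Xi_z(g)=\sigma_a,\Xi_{z'}(g)=\sigma_{a'}}p(g)\Lambda(g)$ (terms with $r_{a,a'}=0$ vanish). *)

(* Defs.v *)
From HB Require Import structures.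
From mathcomp Require Import all_boot all_order all_algebra.
Set Implicit Arguments. Unset Strict Implicit. Unset Printing Implicit Defensive.
Import Order.TTheory GRing.Theory Num.Theory.
Local Open Scope ring_scope.

Section Defs.
Variable C : numClosedFieldType.
Variable n : nat.

Definition qdim := (2 ^ n)%N.
Definition Mat := 'M[C]_qdim.

Definition adj (A : Mat) : Mat := (map_mx (fun z => z^*) A)^T.

Definition hs (A B : Mat) : C := \tr (adj A *m B).

Definition unitary_mat (g : Mat) : Prop := g *m adj g = 1%:M /\ adj g *m g = 1%:M.

Definition qbit (i : 'I_qdim) (k : 'I_n) : 'I_2 := inord (odd (i %/ 2 ^ k)).

(* Pauli labels a in F_2^{2n}: per qubit a pair of bits, with
   (false,false) = 1, (false,true) = X, (true,true) = Y, (true,false) = Z *)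
Definition plabel := {ffun 'I_n -> bool * bool}.

Definition pauli1 (b : bool * bool) : 'M[C]_2 :=
  match b with
  | (false, false) => \matrix_(i < 2, j < 2) (if i == j then 1 else 0)
  | (false, true)  => \matrix_(i < 2, j < 2) (if i == j then 0 else 1)
  | (true, true)   => \matrix_(i < 2, j < 2)
                        (if i == j then 0 else if (i : nat) == 0%N then - 'i else 'i)
  | (true, false)  => \matrix_(i < 2, j < 2)
                        (if i == j then (if (i : nat) == 0%N then 1 else -1) else 0)
  end.

Definition pauli (a : plabel) : Mat :=
  \matrix_(i, j) \prod_(k < n) pauli1 (a k) (qbit i k) (qbit j k).

Definition npauli (a : plabel) : Mat := (sqrtC (qdim%:R : C))^-1 *: pauli a.

Definition padd (a b : plabel) : plabel :=
  [ffun k => (xorb (a k).1 (b k).1, xorb (a k).2 (b k).2)].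

(* [a,a'] = 0  iff sigma_a and sigma_a' commute *)
Definition pcomm (a b : plabel) : bool := pauli a *m pauli b == pauli b *m pauli a.

(* beta(a,a'): sigma_a sigma_a' = (-1)^beta sigma_{a+a'} *)
Definition pbeta (a b : plabel) : bool := pauli a *m pauli b == - pauli (padd a b).

Definition Zlabel (z : {ffun 'I_n -> bool}) : plabel := [ffun k => (z k, false)].
Definition Zop (z : {ffun 'I_n -> bool}) : Mat := pauli (Zlabel z).

Definition clifford (g : Mat) : Prop :=
  unitary_mat g /\ forall a, exists b, g *m pauli a *m adj g = pauli b \/
                                   g *m pauli a *m adj g = - pauli b.

(* Xi_z(g) = sigma_b  iff  g^dagger Z_z g = +- sigma_b *)
Definition Xi (z : {ffun 'I_n -> bool}) (g : Mat) (b : plabel) : bool :=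
  (adj g *m Zop z *m g == pauli b) || (adj g *m Zop z *m g == - pauli b).

Definition Eb (x : 'I_qdim) : Mat := delta_mx x x.

Definition omega (g A : Mat) : Mat := g *m A *m adj g.
Definition omegaD (g A : Mat) : Mat := adj g *m A *m g.

Definition Mmeas (A : Mat) : Mat := \sum_(x : 'I_qdim) hs (Eb x) A *: Eb x.

Section Distribution.
(* a (finitely supported) distribution p on Clifford unitaries:
   sample index i with probability p i, unitary_mat g i, noise Lam i *)
Variable I : finType.
Variables (p : I -> C) (g : I -> Mat) (Lam : I -> Mat -> Mat).

Definition Sframe (A : Mat) : Mat := \sum_i p i *: omegaD (g i) (Mmeas (omega (g i) A)).

Definition s1 (a : plabel) : C :=
  \sum_(z : {ffun 'I_n -> bool}) \sum_(i | Xi z (g i) a) p i.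

Definition r2 (a a' : plabel) : C :=
  \sum_(z : {ffun 'I_n -> bool}) \sum_(z' : {ffun 'I_n -> bool})
     \sum_(i | Xi z (g i) a && Xi z' (g i) a') p i.

Definition s2 (a a' : plabel) : C := (-1) ^+ pbeta a a' * r2 a a'.

(* bar Lambda_{a,a'} (with 0^-1 = 0, so it vanishes when r_{a,a'} = 0) *)
Definition Lambar (a a' : plabel) (A : Mat) : Mat :=
  (r2 a a')^-1 *: \sum_(z : {ffun 'I_n -> bool}) \sum_(z' : {ffun 'I_n -> bool})
     \sum_(i | Xi z (g i) a && Xi z' (g i) a') p i *: Lam i A.

Definition estimator (Sinv : Mat -> Mat) (O : Mat) (i : I) (x : 'I_qdim) : C :=
  hs O (Sinv (omegaD (g i) (Eb x))).

Definition outprob (rho : Mat) (i : I) (x : 'I_qdim) : C :=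
  (omega (g i) (Lam i rho)) x x.

Definition second_moment (Sinv : Mat -> Mat) (O rho : Mat) : C :=
  \sum_i p i * \sum_(x : 'I_qdim) outprob rho i x * (estimator Sinv O i x) ^+ 2.

End Distribution.

Definition herm_mat (A : Mat) : Prop := adj A = A.
Definition density_mat (rho : Mat) : Prop :=
  herm_mat rho /\ (forall v : 'cV[C]_qdim, 0 <= (((map_mx (fun z => z^*) v)^T) *m rho *m v) 0 0) /\ \tr rho = 1.

End Defs.

(* Main.v *)
Require Import Defs.
From mathcomp Require Import all_boot all_order all_algebra.
From mathcomp Require Import zify ring.
Import Order.TTheory GRing.Theory Num.Theory.
Local Open Scope ring_scope.
Section Q.
Variable C : numClosedFieldType.
Lemma conjN (x : C) : (- x)^* = - x^*. Proof. exact: rmorphN. Qed.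
Lemma ord2P (s : 'I_2) : s = ord0 \/ s = ord_max.
Proof. case: s => [[|[|k]]] Hk; [left|right|by []]; exact/val_inj. Qed.

Ltac q2 := repeat match goal with s : 'I_2 |- _ => let H := fresh in destruct (ord2P s) as [H|H]; subst s end.
Ltac csimp := rewrite ?(conjC0, conjC1, conjN, conjCi, opprK, mul0r, mulr0, mul1r, mulr1, add0r, addr0, mulNr, mulrN, mulCii, subrr, addNr, oppr0).

Lemma p1_herm b s t : (pauli1 C b t s)^* = pauli1 C b s t.
Proof. q2; case: b => [[] []]; rewrite /pauli1 !mxE /=; csimp => //. Qed.

Lemma p1_orth b c : \sum_s \sum_t (pauli1 C b s t)^* * pauli1 C c s t = (b == c)%:R * 2.
Proof. rewrite !big_ord_recl !big_ord0.
case: b => [[] []]; case: c => [[] []]; rewrite /pauli1 !mxE /=; csimp => //.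
Qed.

Lemma p1_compl s t s' t' : \sum_(b : bool * bool) (pauli1 C b s t)^* * pauli1 C b s' t' = ((s == s') && (t == t'))%:R * 2.
Proof. rewrite (eq_bigr (fun b => (pauli1 C (b.1,b.2) s t)^* * pauli1 C (b.1,b.2) s' t')); last by case.
rewrite -(pair_big xpredT xpredT (fun b1 b2 => (pauli1 C (b1,b2) s t)^* * pauli1 C (b1,b2) s' t')) /= !big_bool /=.
q2; rewrite /pauli1 !mxE /=; csimp => //.
Qed.

Definition qadd (b c : bool * bool) := (xorb b.1 c.1, xorb b.2 c.2).
Definition qph (b c : bool * bool) : C :=
  match b, c with
  | (false,true), (true,true) => 'i
  | (true,true), (false,true) => - 'i
  | (true,true), (true,false) => 'i
  | (true,false), (true,true) => - 'i
  | (true,false), (false,true) => 'i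
  | (false,true), (true,false) => - 'i
  | _, _ => 1 end.

Lemma p1_mul b c s u : \sum_t pauli1 C b s t * pauli1 C c t u = qph b c * pauli1 C (qadd b c) s u.
Proof. rewrite !big_ord_recl big_ord0.
q2; case: b => [[] []]; case: c => [[] []]; rewrite /pauli1 /qph /qadd !mxE /=; csimp => //.
Qed.

Lemma p1_diag1 (b : bool * bool) s : b.2 -> pauli1 C b s s = 0.
Proof. q2; case: b => [[] []] //= _; rewrite /pauli1 !mxE //. Qed.
Lemma p1_diag2 (b : bool * bool) s t : ~~ b.2 -> s != t -> pauli1 C b s t = 0.
Proof. case: b => [[] []] //= _ /negPf H; rewrite /pauli1 !mxE H //. Qed.
End Q.
Lemma bits_inj_nat m i j : (i < 2 ^ m)%N -> (j < 2 ^ m)%N ->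
  (forall k, (k < m)%N -> odd (i %/ 2 ^ k) = odd (j %/ 2 ^ k)) -> i = j.
Proof.
elim: m i j => [|m IH] i j Hi Hj H.
  by move: Hi Hj; rewrite expn0 !ltnS !leqn0 => /eqP -> /eqP ->.
have H0 := H 0%N (ltn0Sn _); rewrite expn0 !divn1 in H0.
have E : i./2 = j./2.
  have Hi2 : (i./2 < 2 ^ m)%N by rewrite -divn2 ltn_divLR // -expnSr.
  have Hj2 : (j./2 < 2 ^ m)%N by rewrite -divn2 ltn_divLR // -expnSr.
  apply: (IH _ _ Hi2 Hj2) => k Hk; rewrite -!divn2 -!divnMA -!expnS; exact: H k.+1 Hk.
by rewrite -(odd_double_half i) -(odd_double_half j) H0 E.
Qed.

Lemma inordb (b : bool) : nat_of_ord (inord b : 'I_2) = b.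
Proof. by rewrite inordK //; case: b. Qed.

Section B.
Variable n : nat.
Definition bits (i : 'I_(qdim n)) : {ffun 'I_n -> 'I_2} := [ffun k => qbit i k].

Lemma bits_inj : injective bits.
Proof.
move=> i j /ffunP H; apply/val_inj/(@bits_inj_nat n); rewrite ?ltn_ord //.
move=> k Hk; have := H (Ordinal Hk); rewrite !ffunE /qbit => /(congr1 (@nat_of_ord 2)).
rewrite !inordb /=; by case: (odd (i %/ _)); case: (odd (j %/ _)).
Qed.

Lemma bits_bij : bijective bits.
Proof. apply: inj_card_bij; first exact: bits_inj. by rewrite card_ffun !card_ord. Qed.

Lemma bitsE (i : 'I_(qdim n)) k : bits i k = qbit i k.
Proof. by rewrite ffunE. Qed.

Lemma sum_bits (R : nmodType) (F : {ffun 'I_n -> 'I_2} -> R) :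
  \sum_(i : 'I_(qdim n)) F (bits i) = \sum_u F u.
Proof. by rewrite (reindex bits) //; apply: onW_bij; exact: bits_bij. Qed.
End B.

Section T.
Variable C : numClosedFieldType.
Variable n : nat.
Local Notation Mat := (Mat C n).
Local Notation bits := (@bits n).

Lemma pauliE (a : plabel n) i j : pauli C a i j = \prod_k pauli1 C (a k) (bits i k) (bits j k).
Proof. by rewrite /pauli mxE; apply: eq_bigr => k _; rewrite !bitsE. Qed.

Lemma sum1 (f : 'I_n -> 'I_2 -> C) :
  \sum_(i : 'I_(qdim n)) \prod_k f k (bits i k) = \prod_k \sum_s f k s.
Proof. by rewrite (@sum_bits n _ (fun u => \prod_k f k (u k))) bigA_distr_bigA. Qed.

Lemma sum2 (f : 'I_n -> 'I_2 -> 'I_2 -> C) :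
  \sum_(i : 'I_(qdim n)) \sum_(j : 'I_(qdim n)) \prod_k f k (bits i k) (bits j k)
  = \prod_k \sum_s \sum_t f k s t.
Proof.
rewrite -(sum1 (fun k s => \sum_t f k s t)); apply: eq_bigr => i _.
exact: (sum1 (fun k t => f k (bits i k) t)).
Qed.

Lemma prod_bool2 (c : 'I_n -> bool) :
  \prod_k ((c k)%:R * 2) = ([forall k, c k])%:R * 2 ^+ n :> C.
Proof.
rewrite big_split /= prodr_const card_ord; congr (_ * _).
case: (boolP [forall k, c k]) => [/forallP H | /forallPn [k /negPf Hk]].
  by rewrite big1 // => k _; rewrite H.
by rewrite (bigD1 k) //= Hk mul0r.
Qed.

Lemma qdimC : (qdim n)%:R = 2 ^+ n :> C.
Proof. by rewrite /qdim natrX. Qed.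

Lemma qdim_neq0 : (qdim n)%:R != 0 :> C.
Proof. by rewrite pnatr_eq0 /qdim expn_eq0. Qed.

Lemma adjE (A : Mat) i j : adj A i j = (A j i)^*.
Proof. by rewrite /adj !mxE. Qed.

Lemma pauli_adj (a : plabel n) : adj (pauli C a) = pauli C a.
Proof.
apply/matrixP => i j; rewrite adjE !pauliE rmorph_prod.
by apply: eq_bigr => k _; exact: p1_herm.
Qed.

Lemma hsE (A B : Mat) : hs A B = \sum_i \sum_j (A i j)^* * B i j.
Proof.
rewrite /hs /mxtrace exchange_big; apply: eq_bigr => j _; rewrite mxE.
by apply: eq_bigr => i _; rewrite adjE.
Qed.

Lemma hs_pauli (a b : plabel n) : hs (pauli C a) (pauli C b) = (a == b)%:R * (qdim n)%:R.
Proof.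
rewrite hsE.
under eq_bigr => i _ do under eq_bigr => j _ do rewrite !pauliE rmorph_prod -big_split /=.
rewrite (sum2 (fun k s t => (pauli1 C (a k) s t)^* * pauli1 C (b k) s t)).
under eq_bigr => k _ do rewrite p1_orth.
rewrite prod_bool2 qdimC; congr (_ * _); congr ((nat_of_bool _)%:R).
apply/idP/eqP => [/forallP H|->]; first by apply/ffunP => k; exact/eqP/H.
by apply/forallP => k.
Qed.

Lemma pauli_neq0 (a : plabel n) : pauli C a != 0.
Proof.
apply/negP => /eqP H; have := hs_pauli a a; rewrite {2}H /hs mulmx0 linear0 eqxx mul1r.
by move=> /esym/eqP; rewrite (negPf qdim_neq0).
Qed.

Lemma hsZr (A B : Mat) c : hs A (c *: B) = c * hs A B.
Proof. by rewrite /hs -scalemxAr mxtraceZ. Qed.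
Lemma hsDr (A B B' : Mat) : hs A (B + B') = hs A B + hs A B'.
Proof. by rewrite /hs mulmxDr mxtraceD. Qed.
Lemma hs0r (A : Mat) : hs A 0 = 0.
Proof. by rewrite /hs mulmx0 mxtrace0. Qed.
Lemma hs_sumr (J : finType) (P : pred J) (A : Mat) (F : J -> Mat) :
  hs A (\sum_(j | P j) F j) = \sum_(j | P j) hs A (F j).
Proof. exact: (big_morph _ (hsDr A) (hs0r A)). Qed.
Lemma adjZ (A : Mat) c : adj (c *: A) = c^* *: adj A.
Proof. by apply/matrixP => i j; rewrite !adjE !mxE rmorphM. Qed.
Lemma hsZl (A B : Mat) c : hs (c *: A) B = c^* * hs A B.
Proof. by rewrite /hs adjZ -scalemxAl mxtraceZ. Qed.

Lemma pauli_inj_sign (a b : plabel n) (e : bool) : pauli C a = (-1) ^+ e *: pauli C b -> a = b.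
Proof.
move=> H; apply/eqP; apply/negP => /negP Hab.
have := hs_pauli a a; rewrite {2}H hsZr hs_pauli (negPf Hab) !mul0r mulr0 eqxx mul1r.
by move/esym/eqP; rewrite (negPf qdim_neq0).
Qed.
End T.

Section T2.
Variable C : numClosedFieldType.
Variable n : nat.
Local Notation Mat := (Mat C n).
Local Notation bits := (@bits n).

Lemma bits_forall (i j k l : 'I_(qdim n)) :
  [forall q, (bits i q == bits k q) && (bits j q == bits l q)] = (i == k) && (j == l).
Proof.
apply/idP/idP => [/forallP H|/andP [/eqP-> /eqP->]]; last by apply/forallP => q; rewrite !eqxx.
have E1 : bits i = bits k by apply/ffunP => q; case/andP: (H q) => /eqP.
have E2 : bits j = bits l by apply/ffunP => q; case/andP: (H q) => _ /eqP.
by rewrite (@bits_inj n _ _ E1) (@bits_inj n _ _ E2) !eqxx.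
Qed.

Lemma sumA_pauli i j k l :
  \sum_(a : plabel n) (pauli C a i j)^* * pauli C a k l = ((i == k) && (j == l))%:R * (qdim n)%:R.
Proof.
under eq_bigr => a _ do rewrite !pauliE rmorph_prod -big_split /=.
transitivity (\prod_q \sum_(b : bool * bool) ((pauli1 C b (bits i q) (bits j q))^* * pauli1 C b (bits k q) (bits l q))).
  by rewrite bigA_distr_bigA.
under eq_bigr => q _ do rewrite p1_compl.
by rewrite prod_bool2 bits_forall qdimC.
Qed.

Lemma pauli_compl (X : Mat) :
  X = ((qdim n)%:R)^-1 *: \sum_(a : plabel n) hs (pauli C a) X *: pauli C a.
Proof.
apply/matrixP => k l; rewrite mxE summxE.
have -> : \sum_(a : plabel n) (hs (pauli C a) X *: pauli C a) k l = X k l * (qdim n)%:R.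
  transitivity (\sum_(a : plabel n) \sum_i \sum_j X i j * ((pauli C a i j)^* * pauli C a k l)).
    apply: eq_bigr => a _; rewrite mxE hsE big_distrl /=; apply: eq_bigr => i _.
    rewrite big_distrl /=; apply: eq_bigr => j _; by rewrite mulrA [X i j * _]mulrC.
  rewrite exchange_big /=.
  under eq_bigr => i _ do rewrite exchange_big /=.
  under eq_bigr => i _ do under eq_bigr => j _ do rewrite -big_distrr /= sumA_pauli.
  rewrite (bigD1 k) //= (bigD1 l) //= !eqxx /= mul1r big1; last first.
    by move=> j /negPf Hj; rewrite Hj ?andbF mul0r mulr0.
  rewrite big1; last first.
    move=> i /negPf Hi; rewrite big1 // => j _; by rewrite Hi mul0r mulr0.
  by rewrite !addr0.
by rewrite mulrC -mulrA mulfV ?mulr1 // qdim_neq0.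
Qed.
End T2.

Definition ph4 {C : numClosedFieldType} (c : C) := [|| c == 1, c == -1, c == 'i | c == -'i].

Lemma qph_ph4 (C : numClosedFieldType) b c : ph4 (qph C b c).
Proof. by case: b => [[] []]; case: c => [[] []]; rewrite /ph4 /qph !eqxx ?orbT. Qed.

Lemma ph4M (C : numClosedFieldType) (x y : C) : ph4 x -> ph4 y -> ph4 (x * y).
Proof.
by rewrite /ph4 => /or4P [] /eqP -> /or4P [] /eqP ->;
  rewrite ?(mul1r, mulr1, mulNr, mulrN, opprK, mulCii, mulN1r, mulrN1) !eqxx ?orbT.
Qed.

Lemma ph4_prod (C : numClosedFieldType) (J : finType) (F : J -> C) :
  (forall j, ph4 (F j)) -> ph4 (\prod_j F j).
Proof.
move=> H; apply: (big_ind ph4) => //; first by rewrite /ph4 eqxx.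
exact: ph4M.
Qed.

Lemma sopp_eq (C : numClosedFieldType) (x : C) : x = - x -> x = 0.
Proof.
move=> H; have : x *+ 2 = 0 by rewrite mulr2n {2}H subrr.
by move/eqP; rewrite mulrn_eq0 /= => /eqP.
Qed.

Section T3.
Variable C : numClosedFieldType.
Variable n : nat.
Local Notation Mat := (Mat C n).
Local Notation bits := (@bits n).

Definition pph (a b : plabel n) : C := \prod_k qph C (a k) (b k).

Lemma pauli_mul (a b : plabel n) : pauli C a *m pauli C b = pph a b *: pauli C (padd a b).
Proof.
apply/matrixP => i j; rewrite mxE [RHS]mxE.
under eq_bigr => t _ do rewrite !pauliE -big_split /=.
rewrite pauliE (@sum1 C n (fun q s => pauli1 C (a q) (bits i q) s * pauli1 C (b q) s (bits j q))).
under eq_bigr => q _ do rewrite p1_mul.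
rewrite big_split /pph; congr (_ * _); apply: eq_bigr => q _; by rewrite ?ffunE.
Qed.

Lemma adjM (A B : Mat) : adj (A *m B) = adj B *m adj A.
Proof.
apply/matrixP => i j; rewrite adjE !mxE rmorph_sum; apply: eq_bigr => k _.
by rewrite rmorphM !adjE mulrC.
Qed.

Lemma adjK (A : Mat) : adj (adj A) = A.
Proof. by apply/matrixP => i j; rewrite !adjE conjCK. Qed.

Lemma pauli_diag0 (a : plabel n) x : [exists k, (a k).2] -> pauli C a x x = 0.
Proof. by case/existsP => k Hk; rewrite pauliE (bigD1 k) //= p1_diag1 ?mul0r. Qed.

Lemma pauli_offdiag (a : plabel n) x y : [forall k, ~~ (a k).2] -> x != y -> pauli C a x y = 0.
Proof.
move=> /forallP Ha Hxy; case: (boolP [forall q, bits x q == bits y q]) => [/forallP H|/forallPn [q Hq]].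
  have E : bits x = bits y by apply/ffunP => q; exact/eqP/H.
  by move: Hxy; rewrite (@bits_inj n _ _ E) eqxx.
by rewrite pauliE (bigD1 q) //= p1_diag2 ?mul0r.
Qed.

Lemma vopp_eq (v : Mat) : v = - v -> v = 0.
Proof.
move=> H; have : 2%:R *: v = 0 by rewrite scaler_nat mulr2n {2}H subrr.
by move/eqP; rewrite scaler_eq0 pnatr_eq0 /= => /eqP.
Qed.

Lemma pauli_comm_mul (a b : plabel n) : pcomm C a b ->
  pauli C a *m pauli C b = (-1) ^+ (pbeta C a b) *: pauli C (padd a b).
Proof.
move=> /eqP Hc.
set c := pph a b; set s := padd a b.
have Hm := pauli_mul a b; rewrite -/c -/s in Hm.
have Hph : ph4 c by apply: ph4_prod => k; exact: qph_ph4.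
have Hcc : c^* = c.
  have : adj (pauli C a *m pauli C b) = pauli C a *m pauli C b.
    by rewrite adjM !pauli_adj Hc.
  rewrite Hm adjZ pauli_adj => /eqP; rewrite -subr_eq0 -scalerBl scaler_eq0 subr_eq0.
  by rewrite (negPf (pauli_neq0 _ _ _)) orbF => /eqP.
have Hc1 : (c == 1) || (c == -1).
  move: Hph Hcc; rewrite /ph4 => /or4P [] /eqP -> //; rewrite ?eqxx ?orbT //.
    by rewrite conjCi => /esym/sopp_eq/eqP; rewrite (negPf (neq0Ci C)).
  by rewrite conjN conjCi opprK => /sopp_eq/eqP; rewrite (negPf (neq0Ci C)).
rewrite /pbeta Hm; case/orP: Hc1 => /eqP ->.
  rewrite scale1r; case: eqP => [/vopp_eq/eqP|_]; last by rewrite expr0 scale1r.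
  by rewrite (negPf (pauli_neq0 _ _ _)).
by rewrite scaleN1r eqxx expr1 scaleN1r.
Qed.
End T3.

Lemma cnt1 (V : nmodType) (J Z : finType) (P : J -> Z -> bool) (F : J -> V) :
  (forall j z z', P j z -> P j z' -> z = z') ->
  \sum_z \sum_(j | P j z) F j = \sum_j (if [exists z, P j z] then F j else 0).
Proof.
move=> Hu; under eq_bigr => z _ do rewrite big_mkcond /=.
rewrite exchange_big /=; apply: eq_bigr => j _.
case: existsP => [[z0 Hz0]|H].
  rewrite (bigD1 z0) //= Hz0 big1 ?addr0 // => z Hz; case: ifP => // Hp.
  by rewrite (Hu _ _ _ Hp Hz0) eqxx in Hz.
by apply: big1 => z _; case: ifP => // Hp; exfalso; apply: H; exists z.
Qed.

Lemma cnt2 (V : nmodType) (J Z : finType) (P Q : J -> Z -> bool) (F : J -> V) :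
  (forall j z z', P j z -> P j z' -> z = z') ->
  (forall j z z', Q j z -> Q j z' -> z = z') ->
  \sum_z \sum_z' \sum_(j | P j z && Q j z') F j =
  \sum_j (if [exists z, P j z] && [exists z', Q j z'] then F j else 0).
Proof.
move=> HP HQ.
transitivity (\sum_z \sum_(j | P j z) (if [exists z', Q j z'] then F j else 0)).
  apply: eq_bigr => z _.
  rewrite (@cnt1 _ _ _ (fun j z' => P j z && Q j z') F); last first.
    by move=> j z1 z2 /andP [_ H1] /andP [_ H2]; exact: HQ H1 H2.
  rewrite [RHS]big_mkcond /=; apply: eq_bigr => j _.
  case: (boolP (P j z)) => Hp; first by [].
  by case: existsP => // [[z' //]].
rewrite cnt1 //; apply: eq_bigr => j _; by case: ([exists z, P j z]).
Qed.

Section U.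
Variable C : numClosedFieldType.
Variable n : nat.
Local Notation Mat := (Mat C n).
Variable g : Mat.
Hypothesis Hg : clifford g.

Lemma gu1 : g *m adj g = 1%:M. Proof. by case: Hg => [[]]. Qed.
Lemma gu2 : adj g *m g = 1%:M. Proof. by case: Hg => [[]]. Qed.

Lemma omegaDK (A : Mat) : omegaD g (omega g A) = A.
Proof. by rewrite /omegaD /omega !mulmxA gu2 mul1mx -mulmxA gu2 mulmx1. Qed.
Lemma omegaK (A : Mat) : omega g (omegaD g A) = A.
Proof. by rewrite /omegaD /omega !mulmxA gu1 mul1mx -mulmxA gu1 mulmx1. Qed.
Lemma omegaM (A B : Mat) : omega g A *m omega g B = omega g (A *m B).
Proof. by rewrite /omega !mulmxA -[g *m A *m adj g *m g]mulmxA gu2 mulmx1. Qed.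
Lemma omegaDM (A B : Mat) : omegaD g A *m omegaD g B = omegaD g (A *m B).
Proof. by rewrite /omegaD !mulmxA -[adj g *m A *m g *m adj g]mulmxA gu1 mulmx1. Qed.
Lemma omegaZ (A : Mat) c : omega g (c *: A) = c *: omega g A.
Proof. by rewrite /omega -scalemxAr -scalemxAl. Qed.
Lemma omegaDZ (A : Mat) c : omegaD g (c *: A) = c *: omegaD g A.
Proof. by rewrite /omegaD -scalemxAr -scalemxAl. Qed.
Lemma omega_tr (A : Mat) : \tr (omega g A) = \tr A.
Proof. by rewrite /omega mxtrace_mulC mulmxA gu2 mul1mx. Qed.

Lemma sign_sq (e : bool) : (-1) ^+ e * (-1) ^+ e = 1 :> C.
Proof. by case: e; rewrite ?expr0 ?expr1 ?mulr1 ?mulN1r ?opprK. Qed.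

Lemma Xi_omega z (a : plabel n) : Xi z g a -> exists e : bool, omega g (pauli C a) = (-1) ^+ e *: Zop C z.
Proof.
case/orP => /eqP H.
  by exists false; rewrite -H -/(omegaD g _) omegaK expr0 scale1r.
exists true; rewrite expr1 scaleN1r.
have -> : pauli C a = - omegaD g (Zop C z) by rewrite /omegaD H opprK.
by rewrite /omega mulmxN mulNmx -[g *m _ *m adj g]/(omega g _) omegaK.
Qed.

Lemma Zlabel_inj : injective (@Zlabel n).
Proof.
move=> z z' /ffunP H; apply/ffunP => k; have := H k; rewrite !ffunE; by case.
Qed.

Lemma Xi_uniq z z' (a : plabel n) : Xi z g a -> Xi z' g a -> z = z'.
Proof.
move=> /Xi_omega [e He] /Xi_omega [e' He']; apply: Zlabel_inj.
apply: (@pauli_inj_sign C n _ _ (e (+) e')).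
have : (-1) ^+ e *: Zop C z = (-1) ^+ e' *: Zop C z' by rewrite -He -He'.
move/(congr1 (fun M => (-1) ^+ e *: M)); rewrite !scalerA sign_sq scale1r /Zop => ->.
clear He He'; congr (_ *: _); by case: e; case: e'; rewrite /= ?expr0 ?expr1 ?mulr1 ?mul1r ?mulN1r ?opprK.
Qed.

Lemma Xi_none (a : plabel n) x : ~~ [exists z, Xi z g a] -> omega g (pauli C a) x x = 0.
Proof.
move=> Hn; case: Hg => _ /(_ a) [b Hb].
have Hb' : exists e : bool, omega g (pauli C a) = (-1) ^+ e *: pauli C b.
  by case: Hb => H; [exists false; rewrite expr0 scale1r | exists true; rewrite expr1 scaleN1r].
case: Hb' => e He.
case: (boolP [exists k, (b k).2]) => [Hk|/existsPn Hk].
  by rewrite He mxE pauli_diag0 // mulr0.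
exfalso; move/existsP: Hn; apply; exists [ffun k => (b k).1].
have Eb : Zlabel [ffun k => (b k).1] = b.
  apply/ffunP => k; rewrite !ffunE; move: (Hk k); by case: (b k) => ? [].
rewrite /Xi /Zop Eb.
have -> : pauli C b = (-1) ^+ e *: omega g (pauli C a) by rewrite He scalerA sign_sq scale1r.
rewrite -/(omegaD g _) omegaDZ omegaDK; clear He; case: e; rewrite ?expr0 ?expr1 ?scale1r ?scaleN1r eqxx ?orbT //.
Qed.

Lemma Xi_offdiag z (a : plabel n) x y : Xi z g a -> x != y -> omega g (pauli C a) x y = 0.
Proof.
move=> /Xi_omega [e ->] Hxy; rewrite mxE /Zop pauli_offdiag ?mulr0 //.
by apply/forallP => k; rewrite ffunE.
Qed.
End U.
Arguments gu1 {C n g}.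
Arguments gu2 {C n g}.
Arguments omegaDK {C n g}.
Arguments omegaK {C n g}.
Arguments omegaM {C n g}.
Arguments omegaDM {C n g}.
Arguments omegaZ {C n g}.
Arguments omegaDZ {C n g}.
Arguments omega_tr {C n g}.
Arguments Xi_omega {C n g}.
Arguments Xi_uniq {C n g}.
Arguments Xi_none {C n g}.
Arguments Xi_offdiag {C n g}.

Section U2.
Variable C : numClosedFieldType.
Variable n : nat.
Local Notation Mat := (Mat C n).

Lemma hs_Eb (A : Mat) (x : 'I_(qdim n)) : hs (Eb C x) A = A x x.
Proof.
rewrite hsE (bigD1 x) //= (bigD1 x) //= !mxE !eqxx /= conjC1 mul1r.
rewrite big1 ?addr0; last by move=> j /negPf Hj; rewrite !mxE Hj andbF conjC0 mul0r.
rewrite big1 ?addr0 // => i /negPf Hi; rewrite big1 // => j _; by rewrite !mxE Hi conjC0 mul0r.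
Qed.

Definition diagm (A : Mat) := forall x y, x != y -> A x y = 0.

Lemma Mmeas_diag (A : Mat) : diagm A -> Mmeas A = A.
Proof.
move=> HA; apply/matrixP => k l; rewrite /Mmeas summxE.
under eq_bigr => x _ do rewrite hs_Eb !mxE.
rewrite (bigD1 k) //= big1 ?addr0; last first.
  by move=> x /negPf Hx; rewrite eq_sym Hx mulr0.
rewrite eqxx /=; case: (eqVneq l k) => [->|Hlk]; first by rewrite mulr1.
by rewrite mulr0 HA // eq_sym.
Qed.

Lemma Mmeas_zero (A : Mat) : (forall x, A x x = 0) -> Mmeas A = 0.
Proof. by move=> HA; rewrite /Mmeas big1 // => x _; rewrite hs_Eb HA scale0r. Qed.

Lemma trace_diag (A B : Mat) : diagm B -> \tr (A *m B) = \sum_x A x x * B x x.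
Proof.
move=> HB; apply: eq_bigr => x _; rewrite mxE (bigD1 x) //= big1 ?addr0 //.
by move=> y Hy; rewrite HB ?mulr0 // eq_sym.
Qed.

Lemma diag_mull (B M : Mat) x y : diagm B -> (B *m M) x y = B x x * M x y.
Proof.
move=> HB; rewrite mxE (bigD1 x) //= big1 ?addr0 //.
by move=> z Hz; rewrite HB ?mul0r // eq_sym.
Qed.

Lemma diag_mul (B B' : Mat) : diagm B -> diagm B' -> diagm (B *m B').
Proof. by move=> HB HB' x y Hxy; rewrite diag_mull // (HB' x y Hxy) mulr0. Qed.

Lemma diag_comm (B B' : Mat) : diagm B -> diagm B' -> B *m B' = B' *m B.
Proof.
move=> HB HB'; apply/matrixP => x y; rewrite !diag_mull //.
case: (eqVneq x y) => [->|Hxy]; first by rewrite mulrC.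
by rewrite (HB x y Hxy) (HB' x y Hxy) !mulr0.
Qed.

Variable g : Mat.
Hypothesis Hg : clifford g.

Lemma Xi_diag (a : plabel n) : [exists z, Xi z g a] -> diagm (omega g (pauli C a)).
Proof. by case/existsP => z Hz x y; exact: (Xi_offdiag Hg _ _ _ _ Hz). Qed.

Lemma K_comm (a a' : plabel n) : [exists z, Xi z g a] -> [exists z, Xi z g a'] -> pcomm C a a'.
Proof.
move=> /Xi_diag Ha /Xi_diag Ha'; apply/eqP.
rewrite -(omegaDK Hg (pauli C a)) -(omegaDK Hg (pauli C a')) !(omegaDM Hg).
by rewrite (diag_comm _ _ Ha Ha').
Qed.

Lemma K_sum (a a' : plabel n) (Y : Mat) :
  \sum_x (omega g Y) x x * (omega g (pauli C a) x x * omega g (pauli C a') x x) =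
  if [exists z, Xi z g a] && [exists z, Xi z g a'] then
    (-1) ^+ (pbeta C a a') * hs (pauli C (padd a a')) Y else 0.
Proof.
case: (boolP [exists z, Xi z g a]) => Ha; last first.
  by rewrite big1 // => x _; rewrite (Xi_none Hg _ _ Ha) mul0r mulr0.
case: (boolP [exists z, Xi z g a']) => Ha'; last first.
  by rewrite big1 // => x _; rewrite (Xi_none Hg _ _ Ha') mulr0 mulr0.
have Hd := Xi_diag _ Ha; have Hd' := Xi_diag _ Ha'.
rewrite /=.
transitivity (\tr (omega g Y *m (omega g (pauli C a) *m omega g (pauli C a')))).
  rewrite trace_diag; last exact: (diag_mul _ _ Hd Hd').
  by apply: eq_bigr => x _; rewrite (diag_mull _ _ _ _ Hd).
rewrite !(omegaM Hg) (omega_tr Hg) pauli_comm_mul; last exact: K_comm.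
rewrite -scalemxAr mxtraceZ mxtrace_mulC /hs pauli_adj //.
Qed.
End U2.

Lemma expand_sm (C : numClosedFieldType) (J X A : finType) (pp : J -> C) (q : J -> X -> C)
   (w : J -> A -> X -> C) (W : A -> C) :
  \sum_j pp j * \sum_x q j x * (\sum_a w j a x * W a) ^+ 2 =
  \sum_a \sum_a' W a * W a' * \sum_j pp j * \sum_x q j x * (w j a x * w j a' x).
Proof.
transitivity (\sum_j \sum_x \sum_a \sum_a' pp j * q j x * (w j a x * W a) * (w j a' x * W a')).
  apply: eq_bigr => j _; rewrite big_distrr /=; apply: eq_bigr => x _.
  rewrite expr2 big_distrlr /= mulrA mulr_sumr; apply: eq_bigr => a _.
  rewrite mulr_sumr; apply: eq_bigr => a' _; by rewrite mulrA.
symmetry.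
transitivity (\sum_a \sum_a' \sum_j \sum_x pp j * q j x * (w j a x * W a) * (w j a' x * W a')).
  apply: eq_bigr => a _; apply: eq_bigr => a' _.
  rewrite mulr_sumr; apply: eq_bigr => j _; rewrite mulr_sumr mulr_sumr.
  apply: eq_bigr => x _; ring.
rewrite exchange_big /=.
under eq_bigr => a' _ do rewrite exchange_big /=.
rewrite exchange_big /=.
under eq_bigr => j _ do (under eq_bigr => a' _ do rewrite exchange_big /=).
under eq_bigr => j _ do rewrite exchange_big /=.
under eq_bigr => j _ do (under eq_bigr => x _ do rewrite exchange_big /=).
done.
Qed.

Section Main.
Variable C : numClosedFieldType.
Variable n : nat.
Local Notation Mat := (Mat C n).
Variable I : finType.
Variables (p : I -> C) (g : I -> Mat) (Lam : I -> Mat -> Mat) (Sinv : Mat -> Mat).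
Hypothesis Hp0 : forall i, 0 <= p i.
Hypothesis Hcl : forall i, clifford (g i).
Hypothesis HS : forall A, Sinv (Sframe p g A) = A.

Local Notation ex i a := [exists z, Xi z (g i) a].

Lemma s1E a : s1 p g a = \sum_i (if ex i a then p i else 0).
Proof.
rewrite /s1 (@cnt1 _ _ _ (fun i z => Xi z (g i) a) p) //.
by move=> j z z' H1 H2; exact: (Xi_uniq (Hcl j) _ _ _ H1 H2).
Qed.

Lemma r2E a a' : r2 p g a a' = \sum_i (if ex i a && ex i a' then p i else 0).
Proof.
rewrite /r2 (@cnt2 _ _ _ (fun i z => Xi z (g i) a) (fun i z => Xi z (g i) a') p) //.
  by move=> j z z' H1 H2; exact: (Xi_uniq (Hcl j) _ _ _ H1 H2).
by move=> j z z' H1 H2; exact: (Xi_uniq (Hcl j) _ _ _ H1 H2).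
Qed.

Lemma LamE a a' A : Lambar p g Lam a a' A =
  (r2 p g a a')^-1 *: \sum_i (if ex i a && ex i a' then p i *: Lam i A else 0).
Proof.
rewrite /Lambar (@cnt2 _ _ _ (fun i z => Xi z (g i) a) (fun i z => Xi z (g i) a') (fun i => p i *: Lam i A)) //.
  by move=> j z z' H1 H2; exact: (Xi_uniq (Hcl j) _ _ _ H1 H2).
by move=> j z z' H1 H2; exact: (Xi_uniq (Hcl j) _ _ _ H1 H2).
Qed.

Lemma MmeasD (A B : Mat) : Mmeas (A + B) = Mmeas A + Mmeas B.
Proof. by rewrite /Mmeas -big_split; apply: eq_bigr => x _; rewrite hsDr scalerDl. Qed.
Lemma MmeasZ (A : Mat) c : Mmeas (c *: A) = c *: Mmeas A.
Proof. by rewrite /Mmeas scaler_sumr; apply: eq_bigr => x _; rewrite hsZr scalerA. Qed.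
Lemma Mmeas0 : Mmeas (0 : Mat) = 0.
Proof. by move: (MmeasZ 0 0); rewrite !scale0r. Qed.

Lemma SframeD (A B : Mat) : Sframe p g (A + B) = Sframe p g A + Sframe p g B.
Proof.
rewrite /Sframe -big_split; apply: eq_bigr => i _.
by rewrite /omega /omegaD mulmxDr mulmxDl MmeasD mulmxDr mulmxDl scalerDr.
Qed.
Lemma SframeZ (A : Mat) c : Sframe p g (c *: A) = c *: Sframe p g A.
Proof.
rewrite /Sframe scaler_sumr; apply: eq_bigr => i _.
by rewrite omegaZ MmeasZ omegaDZ !scalerA mulrC.
Qed.
Lemma Sframe0 : Sframe p g 0 = 0.
Proof. by move: (SframeZ 0 0); rewrite !scale0r. Qed.
Lemma Sframe_sum (J : finType) (F : J -> Mat) : Sframe p g (\sum_j F j) = \sum_j Sframe p g (F j).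
Proof. exact: (big_morph _ SframeD Sframe0). Qed.

Lemma S_pauli a : Sframe p g (pauli C a) = s1 p g a *: pauli C a.
Proof.
rewrite /Sframe s1E scaler_suml; apply: eq_bigr => i _.
case: (boolP (ex i a)) => Ha.
  by rewrite Mmeas_diag ?(omegaDK (Hcl i)) //; exact: Xi_diag (Hcl i) _ Ha.
rewrite Mmeas_zero; last by move=> x; exact: Xi_none (Hcl i) _ _ Ha.
by rewrite /omegaD mulmx0 mul0mx !scaler0 scale0r.
Qed.

Lemma s1_neq0 a : s1 p g a != 0.
Proof.
apply/negP => /eqP H; have := S_pauli a; rewrite H scale0r => E.
have : pauli C a = 0 by rewrite -[pauli C a]HS E -{1}Sframe0 HS.
by move/eqP; rewrite (negPf (pauli_neq0 _ _ _)).
Qed.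

Lemma Sinv_sum (c : plabel n -> C) :
  Sinv (\sum_a c a *: pauli C a) = \sum_a (c a / s1 p g a) *: pauli C a.
Proof.
have <- : Sframe p g (\sum_a (c a / s1 p g a) *: pauli C a) = \sum_a c a *: pauli C a.
  rewrite Sframe_sum; apply: eq_bigr => a _.
  by rewrite SframeZ S_pauli scalerA divfK // s1_neq0.
by rewrite HS.
Qed.

Lemma tr_mulEb (A : Mat) x : \tr (A *m Eb C x) = A x x.
Proof.
rewrite trace_diag; last first.
  move=> y z Hyz; rewrite mxE; case: (eqVneq y x) => [Ey|Ny] //=.
  by subst y; rewrite eq_sym (negPf Hyz).
rewrite (bigD1 x) //= !mxE eqxx mulr1 big1 ?addr0 // => y Hy.
by rewrite mxE (negPf Hy) mulr0.
Qed.

Lemma hs_omegaD_Eb i a x : hs (pauli C a) (omegaD (g i) (Eb C x)) = omega (g i) (pauli C a) x x.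
Proof.
rewrite /hs pauli_adj /omegaD !mulmxA mxtrace_mulC !mulmxA.
exact: tr_mulEb.
Qed.

Variable O : Mat.

Lemma est_formula i x : estimator g Sinv O i x =
  \sum_a (((qdim n)%:R^-1 * omega (g i) (pauli C a) x x / s1 p g a) * hs O (pauli C a)).
Proof.
rewrite /estimator {1}(@pauli_compl C n (omegaD (g i) (Eb C x))) scaler_sumr.
under eq_bigr => a _ do rewrite scalerA hs_omegaD_Eb.
rewrite Sinv_sum hs_sumr; apply: eq_bigr => a _; by rewrite hsZr.
Qed.


Variable Lrho : Mat.
Local Notation V a a' := (\sum_i (if ex i a && ex i a' then p i *: Lam i Lrho else 0)).

Lemma main_eq : second_moment p g Lam Sinv O Lrho =
  (sqrtC ((qdim n)%:R : C))^-1 *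
    \sum_(a : plabel n) \sum_(a' : plabel n | pcomm C a a')
       (s2 p g a a' / (s1 p g a * s1 p g a')) * hs O (npauli C a) * hs O (npauli C a')
         * hs (npauli C (padd a a')) (Lambar p g Lam a a' Lrho).
Proof.
set d := (qdim n)%:R : C.
set sq := sqrtC d.
set W := fun a => d^-1 / s1 p g a * hs O (pauli C a).
set w := fun i a x => omega (g i) (pauli C a) x x.
have Hest : forall i x, estimator g Sinv O i x = \sum_a w i a x * W a.
  move=> i x; rewrite est_formula; apply: eq_bigr => a _; rewrite /W /w; ring.
have HT : forall a a' : plabel n, \sum_i p i * \sum_x outprob g Lam Lrho i x * (w i a x * w i a' x)
     = (-1) ^+ (pbeta C a a') * hs (pauli C (padd a a')) (V a a').
  move=> a a'; rewrite hs_sumr mulr_sumr; apply: eq_bigr => i _.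
  rewrite /outprob /w (@K_sum C n (g i) (Hcl i)); case: ifP => _; last by rewrite hs0r !mulr0.
  by rewrite hsZr mulrCA.
rewrite /second_moment.
under eq_bigr => i _ do under eq_bigr => x _ do rewrite Hest.
rewrite expand_sm.
under eq_bigr => a _ do under eq_bigr => a' _ do rewrite HT.
rewrite mulr_sumr; apply: eq_bigr => a _.
rewrite mulr_sumr [in RHS]big_mkcond /=; apply: eq_bigr => a' _.
case: (boolP (pcomm C a a')) => Hc; last first.
  have -> : V a a' = 0.
    apply: big1 => i _; case: ifP => // /andP [H1 H2].
    by rewrite (@K_comm C n (g i) (Hcl i) a a' H1 H2) in Hc.
  by rewrite hs0r !mulr0.
rewrite LamE /s2 /npauli !hsZr hsZl.
have Hcj : (sq^-1)^* = sq^-1 by rewrite geC0_conj // invr_ge0 sqrtC_ge0 ler0n.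
rewrite Hcj.
set r := r2 p g a a'.
set H := hs (pauli C (padd a a')) (V a a').
have HH : r * r^-1 * H = H.
  case: (eqVneq r 0) => [Hr|Hr]; last by rewrite mulfV // mul1r.
  have HV : V a a' = 0.
    move: Hr; rewrite /r r2E -big_mkcond /= => Hr.
    apply: big1 => i _; case: ifP => // Hi.
    by rewrite (psumr_eq0P (fun i _ => Hp0 i) Hr Hi) scale0r.
  by rewrite /H HV hs0r !mulr0.
have Hd : d^-1 = sq^-1 ^+ 2 by rewrite exprVn sqrtCK.
rewrite /W Hd -[in LHS]HH invfM.
clear HH Hd Hcj.
move: ((-1) ^+ pbeta C a a') r H (s1 p g a) (s1 p g a') (hs O (pauli C a)) (hs O (pauli C a')) (sq^-1).
move=> e r0 H0 s s' h h' t; clear.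
ring.
Qed.
End Main.

Theorem lemma5 (C : numClosedFieldType) (n : nat) (I : finType)
  (p : I -> C) (g : I -> Mat C n) (Lam : I -> Mat C n -> Mat C n)
  (Sinv : Mat C n -> Mat C n) (O rho : Mat C n) :
  (forall i, 0 <= p i) -> \sum_i p i = 1 ->
  (forall i, clifford (g i)) ->
  (forall i, linear (Lam i)) ->
  (forall A, Sinv (Sframe p g A) = A) -> (forall A, Sframe p g (Sinv A) = A) ->
  herm_mat O -> density_mat rho ->
  second_moment p g Lam Sinv O rho =
  (sqrtC ((qdim n)%:R : C))^-1 *
    \sum_(a : plabel n) \sum_(a' : plabel n | pcomm C a a')
       (s2 p g a a' / (s1 p g a * s1 p g a')) * hs O (npauli C a) * hs O (npauli C a')
         * hs (npauli C (padd a a')) (Lambar p g Lam a a' rho).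
Proof.
move=> Hp0 _ Hcl _ HS _ _ _.
by apply: main_eq.
Qed.
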